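(* Let $(M,\varphi,\xi_\alpha,\eta^\alpha,g)$, $\alpha\in\{1,2\}$, be a Lorentz globally framed $f$-manifold with $\xi_1$ timelike, and fix $p\in M$. Let $F:(T_pM)^4\to\mathbb{R}$ be a curvature-like map such that for all $x,y,v\in\operatorname{Im}\varphi_p$ and all $\alpha,\beta,\gamma\in\{1,2\}$: $F(x,\xi_\alpha,y,v)=0$, $F(\xi_\alpha,x,\xi_\beta,y)=\varepsilon_\alpha\varepsilon_\beta\, g(x,y)$, $F(\xi_\alpha,x,\xi_\beta,\xi_\gamma)=0$, and $F(\xi_1,\xi_2,\xi_1,\xi_2)=0$. Then the following are equivalent: (a) $F(u,y,u,y)=0$ for every $u\in N_\varphi(\xi_1)$ and every $y\in u^\perp\cap\operatorname{Im}\varphi_p$ (i.e. $F$ vanishes on every degenerate plane $\mathrm{span}\{u,y\}$ of this type); (b) $F(x,y,v,z)=g(S_*(x,y)v,z)-g(S^*(x,y)v,z)$ for all $x,y,v,z\in T_pM$.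
   Context: A Lorentz globally framed $f$-manifold $(M,\varphi,\xi_\alpha,\eta^\alpha,g)$, $\alpha\in\{1,2\}$, is a manifold of dimension $2n+2$ with a $(1,1)$-tensor field $\varphi$ of constant rank $2n$, vector fields $\xi_1,\xi_2$ and $1$-forms $\eta^1,\eta^2$ with $\varphi^2=-I+\eta^1\otimes\xi_1+\eta^2\otimes\xi_2$, $\eta^\alpha(\xi_\beta)=\delta^\alpha_\beta$, and a Lorentz metric $g$ with $g(\varphi X,\varphi Y)=g(X,Y)-\sum_\alpha\varepsilon_\alpha\eta^\alpha(X)\eta^\alpha(Y)$, where $\varepsilon_\alpha=g(\xi_\alpha,\xi_\alpha)=\pm1$ (here $\varepsilon_1=-1$, $\varepsilon_2=1$). Put $\tilde\xi=\xi_1+\xi_2$ and $\tilde\eta=\sum_\alpha\varepsilon_\alpha\eta^\alpha$. A curvature-like map $F:V^4\to\mathbb{R}$ is a multilinear map with $F(y,x,z,w)=-F(x,y,z,w)$, $F(z,w,x,y)=F(x,y,z,w)$, and $F(x,y,z,w)+F(x,z,w,y)+F(x,w,y,z)=0$. $N_\varphi(\xi_1)=\{(\xi_1)_p+x: x\in\operatorname{Im}\varphi_p,\ g(x,x)=1\}$. The $(1,3)$-tensors $S^*,S_*$ are $S^*(x,y)v=\tilde\eta(y)\tilde\eta(v)x-\tilde\eta(x)\tilde\eta(v)y+g(y,v)\tilde\eta(x)\tilde\xi-g(x,v)\tilde\eta(y)\tilde\xi$, $S_*(x,y)v=-g(\varphi y,\varphi v)\varphi^2x+g(\varphi x,\varphi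 v)\varphi^2y$. *)

(* Defs.v *)
From HB Require Import structures.
From mathcomp Require Import all_boot all_order all_algebra.
From mathcomp Require Import reals.
Set Implicit Arguments. Unset Strict Implicit. Unset Printing Implicit Defensive.
Import Order.TTheory GRing.Theory Num.Theory.
Local Open Scope ring_scope.

(* Pointwise (tangent space T_pM) model.  T_pM is identified with row vectors
   'rV[R]_N, N = 2n+2.  Linear endomorphisms act on the right: phi_p x = x *m phi.
   The metric g_p is given by its Gram matrix G; the 1-forms eta^alpha_p by
   column vectors: eta^alpha(x) = (x *m eta alpha) 0 0.  alpha ranges over 'I_2
   (ord0 <-> alpha = 1, 1 <-> alpha = 2). *)

Section Defs.
Variable R : realType.
Variable N : nat.
Notation V := 'rV[R]_N.

Definition gform (G : 'M[R]_N) (x y : V) : R := (x *m G *m y^T) 0 0.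
Definition evf (e : 'cV[R]_N) (x : V) : R := (x *m e) 0 0.

Definition in_im (phi : 'M[R]_N) (x : V) : bool := (x <= phi)%MS.

Definition eps (G : 'M[R]_N) (xi : 'I_2 -> V) (a : 'I_2) : R := gform G (xi a) (xi a).

Definition xit (xi : 'I_2 -> V) : V := xi ord0 + xi 1.
Definition etat (G : 'M[R]_N) (xi : 'I_2 -> V) (eta : 'I_2 -> 'cV[R]_N) (x : V) : R :=
  \sum_(a < 2) eps G xi a * evf (eta a) x.

Definition multilinear4 (F : V -> V -> V -> V -> R) : Prop :=
  (forall (c : R) x x' y v w, F (c *: x + x') y v w = c * F x y v w + F x' y v w) /\
  (forall (c : R) x y y' v w, F x (c *: y + y') v w = c * F x y v w + F x y' v w) /\
  (forall (c : R) x y v v' w, F x y (c *: v + v') w = c * F x y v w + F x y v' w) /\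
  (forall (c : R) x y v w w', F x y v (c *: w + w') = c * F x y v w + F x y v w').

Definition curvature_like (F : V -> V -> V -> V -> R) : Prop :=
  multilinear4 F /\
  (forall x y z w, F y x z w = - F x y z w) /\
  (forall x y z w, F z w x y = F x y z w) /\
  (forall x y z w, F x y z w + F x z w y + F x w y z = 0).

Definition in_Nphi (G phi : 'M[R]_N) (xi : 'I_2 -> V) (u : V) : Prop :=
  exists x : V, in_im phi x /\ gform G x x = 1 /\ u = xi ord0 + x.

Definition Sup (G : 'M[R]_N) (xi : 'I_2 -> V) (eta : 'I_2 -> 'cV[R]_N) (x y v : V) : V :=
  let et := etat G xi eta in
  (et y * et v) *: x - (et x * et v) *: y
  + (gform G y v * et x) *: xit xi - (gform G x v * et y) *: xit xi.

Definition Slow (G phi : 'M[R]_N) (x y v : V) : V :=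
  - (gform G (y *m phi) (v *m phi)) *: (x *m phi *m phi)
  + (gform G (x *m phi) (v *m phi)) *: (y *m phi *m phi).

End Defs.

Definition lorentz_metric (R : realType) (m : nat) (G : 'M[R]_m.+1) : Prop :=
  G^T = G /\ exists P : 'M[R]_m.+1, P \in unitmx /\
     P *m G *m P^T = diag_mx (\row_(i < m.+1) (if i == ord0 then -1 else 1)).

Definition lorentz_gf (R : realType) (n : nat) (phi G : 'M[R]_(n.*2.+2))
    (xi : 'I_2 -> 'rV[R]_(n.*2.+2)) (eta : 'I_2 -> 'cV[R]_(n.*2.+2)) : Prop :=
  [/\ \rank phi = n.*2 /\
      phi *m phi = - 1%:M + \sum_(a < 2) (eta a *m xi a),
      (forall a b : 'I_2, evf (eta a) (xi b) = (a == b)%:R),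
      lorentz_metric G,
      (forall x y, gform G (x *m phi) (y *m phi)
                   = gform G x y - \sum_(a < 2) eps G xi a * evf (eta a) x * evf (eta a) y)
    & (eps G xi ord0 = -1 /\ eps G xi 1 = 1)].

(* Main.v *)
Require Import Defs.
From HB Require Import structures.
From mathcomp Require Import all_boot all_order all_algebra.
From mathcomp Require Import reals.
From mathcomp Require Import ring lra zify.
Import Order.TTheory GRing.Theory Num.Theory.
Local Open Scope ring_scope.

Section Generic.
Variables (R : realType) (N : nat).
Local Notation V := 'rV[R]_N.

Lemma lin_props (f : V -> R) : (forall c x x', f (c*:x+x') = c*f x + f x') ->
  (forall x x', f (x+x') = f x + f x') /\ (forall c x, f (c*:x) = c * f x).
Proof.
move=> H.
have f0 : f 0 = 0.
  have := H 1 0 0; rewrite scaler0 addr0 mul1r => h.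
  by apply: (addrI (f 0)); rewrite addr0 -h.
split.
  by move=> x x'; have := H 1 x x'; rewrite scale1r mul1r.
by move=> c x; have := H c x 0; rewrite addr0 f0 addr0.
Qed.

Section ML.
Variable D : V -> V -> V -> V -> R.
Hypothesis HD : multilinear4 D.

Lemma mlD1 x x' y v w : D (x+x') y v w = D x y v w + D x' y v w.
Proof. case: HD => H _; exact: (proj1 (@lin_props (fun z => D z y v w) (fun c x x' => H c x x' y v w)) x x'). Qed.
Lemma mlZ1 c x y v w : D (c *: x) y v w = c * D x y v w.
Proof. case: HD => H _; exact: (proj2 (@lin_props (fun z => D z y v w) (fun c x x' => H c x x' y v w)) c x). Qed.
Lemma mlD2 x y y' v w : D x (y+y') v w = D x y v w + D x y' v w.
Proof. case: HD => _ [H _]; exact: (proj1 (@lin_props (fun z => D x z v w) (fun c y y' => H c x y y' v w)) y y'). Qed.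
Lemma mlZ2 c x y v w : D x (c *: y) v w = c * D x y v w.
Proof. case: HD => _ [H _]; exact: (proj2 (@lin_props (fun z => D x z v w) (fun c y y' => H c x y y' v w)) c y). Qed.
Lemma mlD3 x y v v' w : D x y (v+v') w = D x y v w + D x y v' w.
Proof. case: HD => _ [_ [H _]]; exact: (proj1 (@lin_props (fun z => D x y z w) (fun c v v' => H c x y v v' w)) v v'). Qed.
Lemma mlZ3 c x y v w : D x y (c *: v) w = c * D x y v w.
Proof. case: HD => _ [_ [H _]]; exact: (proj2 (@lin_props (fun z => D x y z w) (fun c v v' => H c x y v v' w)) c v). Qed.
Lemma mlD4 x y v w w' : D x y v (w+w') = D x y v w + D x y v w'.
Proof. case: HD => _ [_ [_ H]]; exact: (proj1 (@lin_props (fun z => D x y v z) (fun c w w' => H c x y v w w')) w w'). Qed.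
Lemma mlZ4 c x y v w : D x y v (c *: w) = c * D x y v w.
Proof. case: HD => _ [_ [_ H]]; exact: (proj2 (@lin_props (fun z => D x y v z) (fun c w w' => H c x y v w w')) c w). Qed.
End ML.

Lemma cl_ml {D : V -> V -> V -> V -> R} : curvature_like D -> multilinear4 D. Proof. by case. Qed.
Lemma cl_A {D : V -> V -> V -> V -> R} : curvature_like D -> forall x y z w, D y x z w = - D x y z w.
Proof. by case=> _ []. Qed.
Lemma cl_P {D : V -> V -> V -> V -> R} : curvature_like D -> forall x y z w, D z w x y = D x y z w.
Proof. by case=> _ [_ []]. Qed.
Lemma cl_B {D : V -> V -> V -> V -> R} : curvature_like D -> forall x y z w, D x y z w + D x z w y + D x w y z = 0.
Proof. by case=> _ [_ [_ ]]. Qed.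
Lemma cl_L {D : V -> V -> V -> V -> R} : curvature_like D -> forall x y z w, D x y w z = - D x y z w.
Proof. by move=> H x y z w; rewrite -(cl_P H) (cl_A H) (cl_P H). Qed.
Lemma cl_xx {D : V -> V -> V -> V -> R} : curvature_like D -> forall x z w, D x x z w = 0.
Proof.
move=> H x z w; have := cl_A H x x z w; lra.
Qed.
Lemma cl_zz {D : V -> V -> V -> V -> R} : curvature_like D -> forall x y z, D x y z z = 0.
Proof. by move=> H x y z; rewrite -(cl_P H) (cl_xx H). Qed.

Lemma cl_sub (F T : V -> V -> V -> V -> R) : curvature_like F -> curvature_like T ->
  curvature_like (fun x y v w => F x y v w - T x y v w).
Proof.
move=> HF HT; split; last split; last split.
- have [F1 [F2 [F3 F4]]] := cl_ml HF; have [T1 [T2 [T3 T4]]] := cl_ml HT.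
  split; last split; last split.
  + by move=> c x x' y v w; rewrite F1 T1; ring.
  + by move=> c x y y' v w; rewrite F2 T2; ring.
  + by move=> c x y v v' w; rewrite F3 T3; ring.
  + by move=> c x y v w w'; rewrite F4 T4; ring.
- move=> x y z w /=; rewrite (cl_A HF x y) (cl_A HT x y); ring.
- by move=> x y z w /=; rewrite (cl_P HF) (cl_P HT).
- move=> x y z w /=; have h1 := cl_B HF x y z w; have h2 := cl_B HT x y z w.
  lra.
Qed.

End Generic.
Arguments lin_props {R N f}.
Arguments mlD1 {R N D}. Arguments mlD2 {R N D}. Arguments mlD3 {R N D}. Arguments mlD4 {R N D}.
Arguments mlZ1 {R N D}. Arguments mlZ2 {R N D}. Arguments mlZ3 {R N D}. Arguments mlZ4 {R N D}.
Arguments cl_ml {R N D}. Arguments cl_A {R N D}. Arguments cl_P {R N D}. Arguments cl_B {R N D}.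
Arguments cl_L {R N D}. Arguments cl_xx {R N D}. Arguments cl_zz {R N D}. Arguments cl_sub {R N F T}.

Lemma cl_ext (R : realType) (N : nat) (F T : 'rV[R]_N -> 'rV[R]_N -> 'rV[R]_N -> 'rV[R]_N -> R) :
  (forall x y v w, F x y v w = T x y v w) -> curvature_like T -> curvature_like F.
Proof.
move=> E [[H1 [H2 [H3 H4]]] [HA [HP HB]]].
split; last split; last split.
- split; last split; last split; move=> *; rewrite !E; [exact: H1|exact: H2|exact: H3|exact: H4].
- by move=> *; rewrite !E HA.
- by move=> *; rewrite !E HP.
- by move=> *; rewrite !E HB.
Qed.

Lemma sum2 {U : nmodType} (f : 'I_2 -> U) : \sum_(a < 2) f a = f 0 + f 1.
Proof. by rewrite big_ord_recl big_ord1; congr (_ + f _); apply: val_inj. Qed.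

Lemma ord2 (a : 'I_2) : a = 0 \/ a = 1.
Proof. by case: a => -[|[|//]] h; [left|right]; apply: val_inj. Qed.

Section Frame.
Variables (R : realType) (n : nat).
Local Notation N := (n.*2.+2).
Local Notation V := 'rV[R]_N.
Variables (phi G : 'M[R]_N) (xi : 'I_2 -> V) (eta : 'I_2 -> 'cV[R]_N).
Hypothesis Hgf : lorentz_gf phi G xi eta.

Local Notation g := (gform G).
Local Notation et a := (evf (eta a)).

Lemma evfD a x y : et a (x + y) = et a x + et a y.
Proof. by rewrite /evf mulmxDl mxE. Qed.
Lemma evfZ a c x : et a (c *: x) = c * et a x.
Proof. by rewrite /evf -scalemxAl mxE. Qed.
Lemma evfN a x : et a (- x) = - et a x.
Proof. by rewrite -scaleN1r evfZ mulN1r. Qed.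
Lemma evf0 a : et a 0 = 0.
Proof. by rewrite /evf mul0mx mxE. Qed.

Lemma gDl x y z : g (x + y) z = g x z + g y z.
Proof. by rewrite /gform !mulmxDl mxE. Qed.
Lemma gZl c x z : g (c *: x) z = c * g x z.
Proof. by rewrite /gform -!scalemxAl mxE. Qed.
Lemma gDr x y z : g x (y + z) = g x y + g x z.
Proof. by rewrite /gform linearD /= mulmxDr mxE. Qed.
Lemma gZr c x z : g x (c *: z) = c * g x z.
Proof. by rewrite /gform linearZ /= -scalemxAr mxE. Qed.
Lemma gNl x z : g (- x) z = - g x z.
Proof. by rewrite -scaleN1r gZl mulN1r. Qed.
Lemma gNr x z : g x (- z) = - g x z.
Proof. by rewrite -scaleN1r gZr mulN1r. Qed.
Lemma g0l z : g 0 z = 0.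
Proof. by rewrite /gform !mul0mx mxE. Qed.
Lemma g0r z : g z 0 = 0.
Proof. by rewrite /gform trmx0 mulmx0 mxE. Qed.

Lemma gsym x y : g x y = g y x.
Proof.
case: Hgf => _ _ [GT _] _ _.
rewrite /gform.
rewrite -[in LHS](trmxK (x *m G *m y^T)) [in LHS]mxE.
rewrite !trmx_mul trmxK GT.
by rewrite mulmxA.
Qed.

Lemma eps0 : eps G xi 0 = -1. Proof. by case: Hgf => _ _ _ _ []. Qed.
Lemma eps1 : eps G xi 1 = 1. Proof. by case: Hgf => _ _ _ _ []. Qed.

Lemma etxi a b : et a (xi b) = (a == b)%:R.
Proof. by case: Hgf => _ H. Qed.

Lemma phi2 x : x *m phi *m phi = - x + et 0 x *: xi 0 + et 1 x *: xi 1.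
Proof.
case: Hgf => [[_ H]] _ _ _ _.
rewrite -mulmxA H mulmxDr mulmxN mulmx1 mulmx_sumr sum2 -addrA.
by rewrite !mulmxA [x *m eta 0]mx11_scalar [x *m eta 1]mx11_scalar !mul_scalar_mx.
Qed.

Lemma etphi a x : et a (x *m phi) = 0.
Proof.
have [[Hr H] _ _ _ _] := Hgf.
set E := \sum_(a < 2) eta a *m xi a.
have rE : (\rank E <= 2)%N.
  have sE : (E <= (eta 0 *m xi 0 + eta 1 *m xi 1)%MS)%MS.
    by rewrite /E sum2; apply: addmx_sub_adds; apply: submx_refl.
  apply: leq_trans (mxrankS sE) _.
  apply: leq_trans (leq_of_leqif (mxrank_adds_leqif _ _)) _.
  have r1 b : (\rank (eta b *m xi b) <= 1)%N.
    exact: leq_trans (mxrankM_maxr _ _) (rank_leq_row _).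
  by rewrite -[2%N]/(1 + 1)%N leq_add.
have e1 : (1%:M : 'M[R]_N) = E + - (phi *m phi) by rewrite H opprD opprK addrC subrK.
have r2 : (n.*2 <= \rank (phi *m phi))%N.
  have s1 : ((1%:M : 'M[R]_N) <= (E + - (phi *m phi))%MS)%MS.
    by rewrite {1}e1; apply: addmx_sub_adds; apply: submx_refl.
  have := mxrankS s1; rewrite mxrank1 => h.
  have := leq_trans h (leq_of_leqif (mxrank_adds_leqif _ _)).
  rewrite mxrank_opp => h2; lia.
have sub := submxMl phi phi.
have eqp : (phi *m phi == phi)%MS.
  by rewrite -(geq_leqif (mxrank_leqif_eq sub)) Hr.
case/andP: eqp => _ s2.
have /submxP [D hD] := submx_trans (submxMl x phi) s2.
rewrite hD mulmxA phi2 !evfD !evfN !evfZ !etxi.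
by case: (ord2 a) => ->; rewrite /=; ring.
Qed.


Lemma xiphi b : xi b *m phi = 0.
Proof.
have h := phi2 (xi b *m phi).
rewrite !etphi !scale0r !addr0 in h.
have e : xi b *m phi *m phi = 0.
  by rewrite phi2 !etxi; case: (ord2 b) => ->; rewrite /= scale0r scale1r ?addr0;
     rewrite ?addNr // addrC addKr.
move: h; rewrite e mul0mx => /eqP; rewrite eq_sym oppr_eq0 => /eqP.
by move=> ->.
Qed.

Lemma gxi x b : g x (xi b) = eps G xi b * et b x.
Proof.
case: Hgf => _ _ _ H _.
have := H x (xi b); rewrite xiphi g0r sum2 !etxi => /eqP; rewrite eq_sym subr_eq0 => /eqP ->.
by case: (ord2 b) => ->; rewrite /=; ring.
Qed.

Lemma imP x a : in_im phi x -> et a x = 0.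
Proof. by case/submxP => D ->; rewrite etphi. Qed.

Lemma im_add x y : in_im phi x -> in_im phi y -> in_im phi (x + y).
Proof. exact: addmx_sub. Qed.
Lemma im_scale c x : in_im phi x -> in_im phi (c *: x).
Proof. exact: scalemx_sub. Qed.
Lemma im0 : in_im phi 0.
Proof. exact: sub0mx. Qed.

Lemma decomp x : x = - (x *m phi *m phi) + et 0 x *: xi 0 + et 1 x *: xi 1.
Proof. by rewrite phi2 -[- x + _ + _]addrA opprD opprK -!addrA addNr addr0. Qed.

Lemma im_decomp x : in_im phi (- (x *m phi *m phi)).
Proof. by rewrite -mulNmx; apply: submxMl. Qed.

Lemma gen_vanish (f : V -> R) : (forall c x x', f (c*:x+x') = c*f x + f x') ->
  (forall x, in_im phi x -> f x = 0) -> (forall a, f (xi a) = 0) -> forall x, f x = 0.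
Proof.
move=> Hf H0 H1 x; have [fD fZ] := lin_props Hf.
by rewrite (decomp x) !fD !fZ H0 ?H1 ?mulr0 ?addr0 //; apply: im_decomp.
Qed.

Lemma g_im_xi x a : in_im phi x -> g x (xi a) = 0.
Proof. by move=> h; rewrite gxi imP // mulr0. Qed.
Lemma g_xi_im x a : in_im phi x -> g (xi a) x = 0.
Proof. by move=> h; rewrite gsym g_im_xi. Qed.
Lemma g_xi_xi a b : g (xi a) (xi b) = eps G xi b * (b == a)%:R.
Proof. by rewrite gxi etxi. Qed.

Lemma tE x : etat G xi eta x = - et 0 x + et 1 x.
Proof. by rewrite /etat sum2 eps0 eps1 mulN1r mul1r. Qed.
Lemma t_xi a : etat G xi eta (xi a) = eps G xi a.
Proof. by case: (ord2 a) => ->; rewrite tE !etxi ?eps0 ?eps1 /=; ring. Qed.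
Lemma t_im x : in_im phi x -> etat G xi eta x = 0.
Proof. by move=> h; rewrite tE !imP // oppr0 add0r. Qed.
Lemma tD x y : etat G xi eta (x + y) = etat G xi eta x + etat G xi eta y.
Proof. rewrite !tE !evfD; ring. Qed.
Lemma tZ c x : etat G xi eta (c *: x) = c * etat G xi eta x.
Proof. rewrite !tE !evfZ; ring. Qed.

Definition hf (x z : V) := g (x *m phi) (z *m phi).
Lemma hE x z : hf x z = g x z + et 0 x * et 0 z - et 1 x * et 1 z.
Proof.
case: Hgf => _ _ _ H _; rewrite /hf H sum2 eps0 eps1; ring.
Qed.
Lemma hDl x y z : hf (x + y) z = hf x z + hf y z.
Proof. by rewrite /hf mulmxDl gDl. Qed.
Lemma hZl c x z : hf (c *: x) z = c * hf x z.
Proof. by rewrite /hf -scalemxAl gZl. Qed.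
Lemma hDr x y z : hf x (y + z) = hf x y + hf x z.
Proof. by rewrite /hf mulmxDl gDr. Qed.
Lemma hZr c x z : hf x (c *: z) = c * hf x z.
Proof. by rewrite /hf -scalemxAl gZr. Qed.
Lemma hsym x z : hf x z = hf z x.
Proof. by rewrite /hf gsym. Qed.
Lemma hxil a z : hf (xi a) z = 0.
Proof. by rewrite /hf xiphi g0l. Qed.
Lemma hxir a z : hf z (xi a) = 0.
Proof. by rewrite hsym hxil. Qed.
Lemma h_im x z : in_im phi x -> hf x z = g x z.
Proof. by move=> h; rewrite hE (imP x 0 h) (imP x 1 h) !mul0r subr0 addr0. Qed.

Definition Tf (x y v z : V) : R :=
  let t := etat G xi eta in
  hf x z * hf y v - hf x v * hf y z
  - (t y * t v * g x z - t x * t v * g y z + g y v * t x * t z - g x v * t y * t z).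

Lemma TfE x y v z :
  gform G (Slow G phi x y v) z - gform G (Sup G xi eta x y v) z = Tf x y v z.
Proof.
have gpp u w : g (u *m phi *m phi) w = - hf u w.
  rewrite phi2 !gDl gNl !gZl (gsym (xi 0)) (gsym (xi 1)) !gxi hE eps0 eps1; ring.
have gxit w : g (xit xi) w = etat G xi eta w.
  by rewrite /xit gDl (gsym (xi 0)) (gsym (xi 1)) !gxi tE eps0 eps1; ring.
rewrite /Slow /Sup /Tf /= !gDl !gNl !gZl !gpp gxit -!/(hf _ _); ring.
Qed.


Ltac hexp := rewrite ?hDl ?hZl ?hDr ?hZr ?gDl ?gZl ?gDr ?gZr ?tD ?tZ.

Lemma Tf1 c x x' y v w : Tf (c *: x + x') y v w = c * Tf x y v w + Tf x' y v w.
Proof. rewrite /Tf /=; hexp; ring. Qed.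
Lemma Tf2 c x y y' v w : Tf x (c *: y + y') v w = c * Tf x y v w + Tf x y' v w.
Proof. rewrite /Tf /=; hexp; ring. Qed.
Lemma Tf3 c x y v v' w : Tf x y (c *: v + v') w = c * Tf x y v w + Tf x y v' w.
Proof. rewrite /Tf /=; hexp; ring. Qed.
Lemma Tf4 c x y v w w' : Tf x y v (c *: w + w') = c * Tf x y v w + Tf x y v w'.
Proof. rewrite /Tf /=; hexp; ring. Qed.

Lemma Tf_cl : curvature_like Tf.
Proof.
split; last split; last split.
- split; [exact: Tf1|split; [exact: Tf2|split; [exact: Tf3|exact: Tf4]]].
- by move=> *; rewrite /Tf /=; ring.
- move=> x y z w; rewrite /Tf /=.
  rewrite (hsym z y) (hsym w x) (hsym z x) (hsym w y) (gsym z y) (gsym w y) (gsym w x) (gsym z x).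
  ring.
- move=> x y z w; rewrite /Tf /=.
  rewrite ?(hsym y x) ?(hsym z x) ?(hsym w x) ?(hsym z y) ?(hsym w y) ?(hsym w z).
  rewrite ?(gsym y x) ?(gsym z x) ?(gsym w x) ?(gsym z y) ?(gsym w y) ?(gsym w z).
  ring.
Qed.

Lemma T_cl : curvature_like (fun x y v z =>
  gform G (Slow G phi x y v) z - gform G (Sup G xi eta x y v) z).
Proof. apply: cl_ext Tf_cl => *; exact: TfE. Qed.

Lemma T2 x y v a : in_im phi x -> in_im phi y -> in_im phi v -> Tf x (xi a) y v = 0.
Proof. by move=> hx hy hv; rewrite /Tf /= !hxil (t_im _ hx) (t_im _ hy) (t_im _ hv); ring. Qed.

Lemma T3 x y a b : in_im phi x -> in_im phi y ->
  Tf (xi a) x (xi b) y = eps G xi a * eps G xi b * g x y.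
Proof.
move=> hx hy; rewrite /Tf /= !hxil !hxir !(t_im _ hx) !(t_im _ hy) !t_xi; ring.
Qed.

Lemma T4 x a b c : in_im phi x -> Tf (xi a) x (xi b) (xi c) = 0.
Proof.
move=> hx; rewrite /Tf /= !hxil !hxir !(t_im _ hx) !(g_im_xi _ _ hx); ring.
Qed.

Lemma T5 : Tf (xi 0) (xi 1) (xi 0) (xi 1) = 0.
Proof. by rewrite /Tf /= !hxil !t_xi !g_xi_xi eps0 eps1 /=; ring. Qed.

Lemma T6 x y : in_im phi x -> g x x = 1 -> in_im phi y -> g (xi 0 + x) y = 0 ->
  Tf (xi 0 + x) y (xi 0 + x) y = 0.
Proof.
move=> hx hxx hy; rewrite gDl g_xi_im // add0r => hxy.
rewrite /Tf /=; hexp.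
rewrite !hxil !hxir !(t_im _ hx) !(t_im _ hy) !t_xi !(h_im _ _ hx) !(h_im _ _ hy) !(g_xi_im _ _ hx) !(g_xi_im _ _ hy).
rewrite !(g_im_xi _ _ hx) !(g_im_xi _ _ hy) (gsym y x) hxy hxx eps0; ring.
Qed.


Lemma gpos x : in_im phi x -> x != 0 -> 0 < g x x.
Proof.
move=> hx x0.
have [_ _ [GT [P [Pu HP]]] _ _] := Hgf.
have GE : G = invmx P *m diag_mx (\row_(i < N) (if i == ord0 then -1 else 1 : R)) *m (invmx P)^T.
  by rewrite -HP trmx_inv !mulmxA mulmxK ?unitmx_tr // mulVmx // mul1mx.
pose lam (y : V) : R := (y *m invmx P) 0 0.
pose Qf (y : V) : R := \sum_(i < n.*2.+1) ((y *m invmx P) 0 (lift ord0 i)) ^+ 2.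
have gq y : g y y = - lam y ^+ 2 + Qf y.
  rewrite /gform GE.
  have -> : y *m (invmx P *m diag_mx (\row_(i < N) (if i == ord0 then -1 else 1 : R)) *m (invmx P)^T) *m y^T
    = (y *m invmx P) *m diag_mx (\row_(i < N) (if i == ord0 then -1 else 1 : R)) *m (y *m invmx P)^T.
    by rewrite trmx_mul !mulmxA.
  rewrite /lam /Qf; set u := y *m invmx P.
  rewrite mul_mx_diag [in LHS]mxE big_ord_recl !mxE /=.
  congr (_ + _); first by rewrite expr2; ring.
  apply: eq_bigr => i _; rewrite !mxE.
  have -> : (lift ord0 i == ord0) = false by apply/negbTE; rewrite eq_sym neq_lift.
  by rewrite mulr1 expr2.
have Qge y : 0 <= Qf y by apply: sumr_ge0 => i _; exact: sqr_ge0.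
have lamD y z : lam (y + z) = lam y + lam z.
  by rewrite /lam mulmxDl !mxE.
have lamZ c y : lam (c *: y) = c * lam y.
  by rewrite /lam -scalemxAl !mxE.
have Q0 y : lam y = 0 -> Qf y = 0 -> y = 0.
  move=> l0 q0.
  have u0 : y *m invmx P = 0.
    apply/rowP => j; rewrite [RHS]mxE.
    have [->|] := eqVneq j ord0; first exact: l0.
    rewrite eq_sym => /unlift_some [k -> _].
    have := @psumr_eq0P _ _ xpredT (fun i => (y *m invmx P) 0 (lift ord0 i) ^+ 2) (fun i _ => sqr_ge0 _) q0 k isT.
    by move/eqP; rewrite sqrf_eq0 => /eqP.
  by move: (mulmxKV Pu y) => /= <-; rewrite u0 mul0mx.
set xi0 := xi 0.
have gx0 : g xi0 xi0 = -1 by rewrite /xi0 g_xi_xi eps0 /= mulr1.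
have hxx0 : g x xi0 = 0 by apply: g_im_xi.
have hx0x : g xi0 x = 0 by apply: g_xi_im.
set z := lam xi0 *: x + (- lam x) *: xi0.
have lz : lam z = 0 by rewrite /z lamD !lamZ; ring.
have gz : g z z = lam xi0 ^+ 2 * g x x - lam x ^+ 2.
  rewrite /z !gDl !gDr !gZl !gZr hxx0 hx0x gx0; ring.
have gz0 : 0 <= g z z by rewrite gq lz; have := Qge z; lra.
have l1 : 1 <= lam xi0 ^+ 2 by have := gq xi0; rewrite gx0; have := Qge xi0; lra.
have [lx0|lxn] := eqVneq (lam x) 0.
  rewrite gq lx0 expr0n /= oppr0 add0r lt_def Qge andbT.
  by apply/eqP => q0; move/eqP: x0; apply; apply: Q0.
have lxp : 0 < lam x ^+ 2 by rewrite lt_def sqr_ge0 andbT sqrf_eq0 lxn.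
move: gz gz0 l1 lxp; set A := lam xi0 ^+ 2; set B := lam x ^+ 2; set C := g x x.
move=> -> h1 h2 h3; nra.
Qed.


Definition gen (p : V) := in_im phi p \/ exists b, p = xi b.

Lemma gen_vanish' (f : V -> R) : (forall c x x', f (c*:x+x') = c*f x + f x') ->
  (forall x, gen x -> f x = 0) -> forall x, f x = 0.
Proof.
move=> Hf H; apply: gen_vanish => // [x hx|a]; apply: H; [left|right; exists a] => //.
Qed.

Lemma ml_gen (D : V -> V -> V -> V -> R) : multilinear4 D ->
  (forall x y v z, gen x -> gen y -> gen v -> gen z -> D x y v z = 0) ->
  forall x y v z, D x y v z = 0.
Proof.
move=> [M1 [M2 [M3 M4]]] H x y v z.
move: x; apply: gen_vanish' => [c x x'|x gx]; first exact: M1.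
move: y; apply: gen_vanish' => [c y y'|y gy]; first exact: M2.
move: v; apply: gen_vanish' => [c v v'|v gv]; first exact: M3.
move: z; apply: gen_vanish' => [c z z'|z gz]; first exact: M4.
exact: H.
Qed.

Lemma D_zero (D : V -> V -> V -> V -> R) : curvature_like D ->
  (forall x y v, in_im phi x -> in_im phi y -> in_im phi v -> forall a, D x (xi a) y v = 0) ->
  (forall x y, in_im phi x -> in_im phi y -> forall a b, D (xi a) x (xi b) y = 0) ->
  (forall x, in_im phi x -> forall a b c, D (xi a) x (xi b) (xi c) = 0) ->
  D (xi 0) (xi 1) (xi 0) (xi 1) = 0 ->
  (forall x y v z, in_im phi x -> in_im phi y -> in_im phi v -> in_im phi z -> D x y v z = 0) ->
  forall x y v z, D x y v z = 0.
Proof.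
move=> HD Z1 Z2 Z3 Z4 Z5.
have B a q r s : gen q -> gen r -> gen s -> D (xi a) q r s = 0.
  case=> [hq|[b ->]]; case=> [hr|[c ->]]; case=> [hs|[d ->]].
  - by rewrite (cl_A HD) Z1 ?oppr0.
  - by rewrite (cl_L HD) Z2 ?oppr0.
  - exact: Z2.
  - exact: Z3.
  - have := cl_B HD (xi a) (xi b) r s.
    by rewrite (cl_L HD (xi a) r) !Z2 // oppr0 !addr0.
  - by rewrite (cl_L HD) -(cl_P HD) Z3 ?oppr0.
  - by rewrite -(cl_P HD) Z3.
  - case: (ord2 a) => ->; case: (ord2 b) => ->; rewrite ?(cl_xx HD) //;
    case: (ord2 c) => ->; case: (ord2 d) => ->; rewrite ?(cl_zz HD) //.
    + by rewrite (cl_L HD) Z4 oppr0.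
    + by rewrite (cl_A HD) Z4 oppr0.
    + by rewrite (cl_A HD) (cl_L HD) Z4 !oppr0.
apply: ml_gen (cl_ml HD) _ => x y v z gx gy gv gz.
case: gx => [hx|[a ->]]; last exact: B.
case: gy => [hy|[a ->]]; first last.
  by rewrite (cl_A HD) B ?oppr0 //; left.
case: gv => [hv|[a ->]]; first last.
  by rewrite -(cl_P HD) B //; left.
case: gz => [hz|[a ->]]; first last.
  by rewrite (cl_L HD) -(cl_P HD) B ?oppr0 //; left.
exact: Z5.
Qed.


Lemma D_core (D : V -> V -> V -> V -> R) : curvature_like D ->
  (forall x y, in_im phi x -> in_im phi y -> g x x = 1 -> g x y = 0 -> D x y x y = 0) ->
  forall x y v z, in_im phi x -> in_im phi y -> in_im phi v -> in_im phi z -> D x y v z = 0.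
Proof.
move=> HD H.
have M := cl_ml HD.
have D0 y v w : D 0 y v w = 0.
  by have := mlZ1 M 0 0 y v w; rewrite scale0r mul0r.
have S1 x y : in_im phi x -> in_im phi y -> g x y = 0 -> D x y x y = 0.
  move=> hx hy hxy; have [->|x0] := eqVneq x 0; first exact: D0.
  have cpos := gpos x hx x0.
  set s := Num.sqrt (g x x).
  have spos : 0 < s by rewrite sqrtr_gt0.
  have sn : s != 0 by rewrite gt_eqF.
  have ss : s ^+ 2 = g x x by rewrite sqr_sqrtr // ltW.
  have ex : x = s *: (s^-1 *: x) by rewrite scalerA mulfV ?scale1r.
  rewrite ex (mlZ1 M) (mlZ3 M) H; first by rewrite !mulr0.
  - exact: im_scale.
  - exact: hy.
  - rewrite gZl gZr -ss; field; exact: sn.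
  - by rewrite gZl hxy mulr0.
have S2 x y : in_im phi x -> in_im phi y -> D x y x y = 0.
  move=> hx hy; have [->|x0] := eqVneq x 0; first exact: D0.
  have cpos := gpos x hx x0.
  have cn : g x x != 0 by rewrite gt_eqF.
  pose k := g x y / g x x.
  have := S1 x (y + (- k) *: x) hx (im_add _ _ hy (im_scale _ _ hx)).
  rewrite gDr gZr /k.
  have -> : g x y + - (g x y / g x x) * g x x = 0 by field.
  move=> /(_ erefl).
  rewrite !(mlD2 M) !(mlZ2 M) !(mlD4 M) !(mlZ4 M) !(cl_xx HD) !(cl_zz HD).
  by move=> h; rewrite -h; ring.
have P1 x y v : in_im phi x -> in_im phi y -> in_im phi v -> D x y v y = 0.
  move=> hx hy hv; have := S2 (x + v) y (im_add _ _ hx hv) hy.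
  rewrite !(mlD1 M) !(mlD3 M) (S2 x y) // (S2 v y) // (cl_P HD v y x y); lra.
have P2 x y v z : in_im phi x -> in_im phi y -> in_im phi v -> in_im phi z ->
    D x y v z = - D x z v y.
  move=> hx hy hv hz; have := P1 x (y + z) v hx (im_add _ _ hy hz) hv.
  rewrite !(mlD2 M) !(mlD4 M) (P1 x y v) // (P1 x z v) //; lra.
move=> x y v z hx hy hv hz.
have e1 : D x v z y = D x y v z by rewrite (P2 x v z y) // (cl_L HD x y z v).
have e2 : D x z y v = D x y v z by rewrite (P2 x z y v) // -(cl_L HD x v y z) e1.
have := cl_B HD x y v z; rewrite e1 e2; lra.
Qed.


Lemma main (F : V -> V -> V -> V -> R) :
  curvature_like F ->
  (forall x y v, in_im phi x -> in_im phi y -> in_im phi v ->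
     forall a : 'I_2, F x (xi a) y v = 0) ->
  (forall x y, in_im phi x -> in_im phi y ->
     forall a b : 'I_2, F (xi a) x (xi b) y = eps G xi a * eps G xi b * gform G x y) ->
  (forall x, in_im phi x ->
     forall a b c : 'I_2, F (xi a) x (xi b) (xi c) = 0) ->
  F (xi ord0) (xi 1) (xi ord0) (xi 1) = 0 ->
  ((forall u y, in_Nphi G phi xi u -> gform G u y = 0 -> in_im phi y -> F u y u y = 0)
   <->
   (forall x y v z, F x y v z = gform G (Slow G phi x y v) z - gform G (Sup G xi eta x y v) z)).
Proof.
move=> HF H1 H2 H3 H4; split; last first.
  move=> Hb u y [x [hx [hxx ->]]] hu hy.
  by rewrite Hb TfE; apply: T6.
move=> Ha.
pose D x y v z := F x y v z - Tf x y v z.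
have HD : curvature_like D.
  apply: cl_ext (cl_sub HF T_cl) => x y v z; rewrite /D /= TfE //.
have M := cl_ml HD.
have Z1 x y v : in_im phi x -> in_im phi y -> in_im phi v -> forall a, D x (xi a) y v = 0.
  by move=> hx hy hv a; rewrite /D H1 // T2 // subrr.
have Z2 x y : in_im phi x -> in_im phi y -> forall a b, D (xi a) x (xi b) y = 0.
  by move=> hx hy a b; rewrite /D H2 // T3 // subrr.
have Z3 x : in_im phi x -> forall a b c, D (xi a) x (xi b) (xi c) = 0.
  by move=> hx a b c; rewrite /D H3 // T4 // subrr.
have Z4 : D (xi 0) (xi 1) (xi 0) (xi 1) = 0 by rewrite /D H4 T5 subrr.
have Z5 := D_core _ HD.
have Dz := D_zero _ HD Z1 Z2 Z3 Z4.
move=> x y v z; rewrite TfE; apply/eqP; rewrite -subr_eq0; apply/eqP.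
change (D x y v z = 0).
apply: Dz => x' y' v' z' hx hy hv hz; apply: Z5 => // {}x {}y {}hx {}hy hxx hxy.
have hu : gform G (xi 0 + x) y = 0 by rewrite gDl g_xi_im // add0r.
have Fu := Ha (xi 0 + x) y (ex_intro _ x (conj hx (conj hxx erefl))) hu hy.
have Tu := T6 x y hx hxx hy hu.
have : D (xi 0 + x) y (xi 0 + x) y = 0 by rewrite /D Fu Tu subrr.
rewrite !(mlD1 M) !(mlD3 M) Z2 // -(cl_P HD x y) (cl_A HD y (xi 0)) Z1 //; lra.
Qed.

End Frame.

Theorem lemma5p6 (R : realType) (n : nat) (n_gt0 : (0 < n)%N)
    (phi G : 'M[R]_(n.*2.+2))
    (xi : 'I_2 -> 'rV[R]_(n.*2.+2)) (eta : 'I_2 -> 'cV[R]_(n.*2.+2))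
    (F : 'rV[R]_(n.*2.+2) -> 'rV[R]_(n.*2.+2) -> 'rV[R]_(n.*2.+2) -> 'rV[R]_(n.*2.+2) -> R) :
  lorentz_gf phi G xi eta ->
  curvature_like F ->
  (forall x y v, in_im phi x -> in_im phi y -> in_im phi v ->
     forall a : 'I_2, F x (xi a) y v = 0) ->
  (forall x y, in_im phi x -> in_im phi y ->
     forall a b : 'I_2, F (xi a) x (xi b) y = eps G xi a * eps G xi b * gform G x y) ->
  (forall x, in_im phi x ->
     forall a b c : 'I_2, F (xi a) x (xi b) (xi c) = 0) ->
  F (xi ord0) (xi 1) (xi ord0) (xi 1) = 0 ->
  ((forall u y, in_Nphi G phi xi u -> gform G u y = 0 -> in_im phi y -> F u y u y = 0)
   <->
   (forall x y v z, F x y v z = gform G (Slow G phi x y v) z - gform G (Sup G xi eta x y v) z)).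
Proof. by move=> Hgf; apply: main. Qed.
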